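(* For every integer $k\geq 3$, the set of odd positive integers not in $\mathcal F(k)$ is nonempty and finite, and $\Gamma(k)\leq 3k-4$. Moreover, $\displaystyle\limsup_{k\to\infty}\frac{\Gamma(k)}{k}=3$.
   Context: The Thue–Morse word is $\mathbf t=\mathbf t_1\mathbf t_2\cdots$ where $\mathbf t_i\in\{0,1\}$ has the parity of the number of $1$'s in the binary expansion of $i-1$. For positive integers $\alpha\le\beta$, $\langle\alpha,\beta\rangle=\mathbf t_\alpha\cdots\mathbf t_\beta$. A $k$-anti-power is a word $w_1\cdots w_k$ with $w_1,\dots,w_k$ pairwise distinct words of equal length. $\mathcal F(k)$ is the set of odd positive integers $m$ such that $\langle 1,km\rangle$ is a $k$-anti-power. $\Gamma(k)=\sup\big((2\mathbb Z^+-1)\setminus\mathcal F(k)\big)$, the largest odd positive integer not in $\mathcal F(k)$. *)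

(* Defs.v *)
From Stdlib Require Import ClassicalEpsilon.
From mathcomp Require Import all_boot all_order all_algebra.
Set Implicit Arguments. Unset Strict Implicit. Unset Printing Implicit Defensive.

(* number of 1's in the binary expansion of n (bits of index >= n vanish) *)
Definition popcount (n : nat) : nat := \sum_(i < n) ((n %/ 2 ^ i) %% 2).

(* Thue--Morse word, 1-indexed: t_i = parity of popcount (i-1) *)
Definition tm (i : nat) : bool := odd (popcount i.-1).

Definition tm_factor (alpha beta : nat) : seq bool :=
  [seq tm i | i <- iota alpha (beta.+1 - alpha)].

Definition antipower (k : nat) (w : seq bool) : bool :=
  (k %| size w) &&
  uniq [seq take (size w %/ k) (drop (j * (size w %/ k)) w) | j <- iota 0 k].

Definition in_F (k m : nat) : bool := odd m && (0 < m) && antipower k (tm_factor 1 (k * m)).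

Definition notin_F (k m : nat) : bool := odd m && (0 < m) && ~~ in_F k m.

Definition is_max_notF (k g : nat) : Prop :=
  notin_F k g /\ forall m, notin_F k m -> m <= g.

(* Gamma(k) = sup of the complement set; equals its maximum whenever the set
   is nonempty and finite (default 0 otherwise, never used). *)
Definition Gamma (k : nat) : nat := epsilon (inhabits 0%N) (is_max_notF k).

(* Main.v *)
Require Import Defs.
From Stdlib Require Import ClassicalEpsilon.
From mathcomp Require Import all_boot all_order all_algebra zify ring lra.
Import Order.TTheory GRing.Theory Num.Theory.

Definition pcL L n := \sum_(i < L) (n %/ 2 ^ i %% 2).

Lemma pcL_S L n : pcL L.+1 n = n %% 2 + pcL L (n %/ 2).
Proof.
rewrite /pcL big_ord_recl expn0 divn1; congr (_ + _).
by apply: eq_bigr => i _; rewrite expnS divnMA.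
Qed.

Lemma pcL_big L n : n <= L -> pcL L n = popcount n.
Proof.
elim: L => [|L IH] Hn.
  by move: Hn; rewrite leqn0 => /eqP->.
move: Hn; rewrite leq_eqVlt => /orP [/eqP->|Hn] //.
rewrite /pcL big_ord_recr /= -/(pcL L n) IH //.
rewrite divn_small ?mod0n ?addn0 //.
exact: leq_trans Hn (ltn_expl L (ltnSn 1)).
Qed.

Lemma popcount_rec n : popcount n = n %% 2 + popcount (n %/ 2).
Proof. by rewrite -(@pcL_big n.+1 n (leqnSn n)) pcL_S pcL_big // leq_div. Qed.

Definition tt n := odd (popcount n).

Lemma tt0 : tt 0 = false.
Proof. by rewrite /tt /popcount big_ord0. Qed.

Lemma tt_rec b n : b < 2 -> tt (b + 2 * n) = odd b (+) tt n.
Proof.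
move=> Hb; rewrite /tt popcount_rec.
have -> : b + 2 * n = n * 2 + b by ring.
rewrite modnMDl divnMDl //.
by rewrite modn_small // divn_small // addn0 oddD.
Qed.

Lemma tE n : tt (2 * n) = tt n.
Proof. by rewrite -(add0n (2 * n)) tt_rec. Qed.

Lemma tO n : tt (2 * n + 1) = ~~ tt n.
Proof. by rewrite addnC tt_rec. Qed.

Lemma ttN e q y : y < 2 ^ e -> tt (2 ^ e * q + y) = tt q (+) tt y.
Proof.
elim: e q y => [|e IH] q y Hy.
  by move: Hy; rewrite expn0 ltnS leqn0 => /eqP->; rewrite tt0 mul1n addn0 addbF.
have Hy2 : y %/ 2 < 2 ^ e by rewrite ltn_divLR // -expnSr.
have -> : 2 ^ e.+1 * q + y = y %% 2 + 2 * (2 ^ e * q + y %/ 2).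
  rewrite [in LHS](divn_eq y 2) expnS.
  move: (y %/ 2) (y %% 2) (2 ^ e) => Y Z N; ring.
rewrite tt_rec ?ltn_pmod // IH //.
have Hy' : y = y %% 2 + 2 * (y %/ 2) by rewrite addnC mulnC -divn_eq.
have -> : tt y = odd (y %% 2) (+) tt (y %/ 2) by rewrite {1}Hy' tt_rec ?ltn_pmod.
by case: (odd _); case: (tt q); case: (tt _).
Qed.

Lemma no3 a : tt a = tt (a+1) -> tt (a+1) = tt (a+2) -> False.
Proof.
move=> h1 h2; have Ha := divn_eq a 2; rewrite modn2 in Ha.
move: (a %/ 2) Ha => b; case: (odd a) => /= Ha.
  have e2 : a+2 = 2 * (b + 1) + 1 by rewrite Ha; ring.
  have e1 : a+1 = 2 * (b + 1) by rewrite Ha; ring.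
  by move: h2; rewrite e2 e1 tE tO; case: (tt _).
have e1 : a+1 = 2 * b + 1 by rewrite Ha; ring.
have e0 : a = 2 * b by rewrite Ha; ring.
by move: h1; rewrite e1 e0 tE tO; case: (tt _).
Qed.

Lemma no4 n n' : tt (2*n) = tt (2*n'+1) -> tt (2*n+1) = tt (2*n'+2) ->
  tt (2*n+2) = tt (2*n'+3) -> tt (2*n+3) = tt (2*n'+4) -> False.
Proof.
have -> : 2*n+2 = 2*(n+1) by ring.
have -> : 2*n+3 = 2*(n+1)+1 by ring.
have -> : 2*n'+2 = 2*(n'+1) by ring.
have -> : 2*n'+3 = 2*(n'+1)+1 by ring.
have -> : 2*n'+4 = 2*(n'+2) by ring.
rewrite !tE !tO => h1 h2 h3 h4.
have := no3 n'.
move: h1 h2 h3 h4; case: (tt n); case: (tt (n+1)); case: (tt n'); case: (tt (n'+1)); case: (tt (n'+2)) => /= H1 H2 H3 H4 N3; first [ by apply: N3 | congruence ].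
Qed.

Lemma no4g n n' : (forall c, c < 4 -> tt (2*n + c) = tt (2*n'+1+c)) -> False.
Proof.
move=> H; apply: (no4 n n').
- by have := H 0 isT; rewrite !addn0.
- by have := H 1 isT; rewrite -addnA.
- by have := H 2 isT; rewrite -addnA.
- by have := H 3 isT; rewrite -addnA.
Qed.

Lemma no4' u r : odd r -> (forall c, c < 4 -> tt (u + c) = tt (u + r + c)) -> False.
Proof.
move=> Hr H.
have Hu := divn_eq u 2; have Hur := divn_eq (u + r) 2.
rewrite !modn2 oddD Hr in Hu Hur.
move: (u %/ 2) (( u + r) %/ 2) Hu Hur => a b.
case: (odd u) => /= Hu Hur.
- apply: (no4g b a) => c hc; have E := H c hc.
  have e1 : 2*b + c = u + r + c by rewrite Hur; ring.
  have e2 : 2*a+1+c = u + c by rewrite [in RHS]Hu; ring.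
  by rewrite e1 e2 E.
- apply: (no4g a b) => c hc; have E := H c hc.
  have e1 : 2*b + 1 + c = u + r + c by rewrite Hur; ring.
  have e2 : 2*a+c = u + c by rewrite [in RHS]Hu; ring.
  by rewrite e1 e2 E.
Qed.

Lemma dec2 d : 0 < d -> exists e o, odd o /\ d = 2 ^ e * o.
Proof.
elim: d {-2}d (leqnn d) => [|n IH] d Hd Hp; first by move: Hd Hp; case: d.
case Ho: (odd d); first by exists 0, d; rewrite expn0 mul1n.
have Hd2 := divn_eq d 2; rewrite modn2 Ho addn0 in Hd2.
have [||e [o [Ho' E]]] := IH (d %/ 2).
- by rewrite -ltnS; apply: leq_trans Hd; rewrite ltn_Pdiv.
- by rewrite divn_gt0 //; move: Hp Ho; rewrite leq_eqVlt => /orP[/eqP<-|]. 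
exists e.+1, o; split => //; by rewrite Hd2 E expnS; ring.
Qed.

Lemma sep k m i j : 3 <= k -> odd m -> 3*k-3 <= m -> i < j -> j < k ->
  (forall x, x < m -> tt (i * m + x) = tt (j * m + x)) -> False.
Proof.
move=> hk hm hkm hij hjk H.
have [e [o [Ho Ed]]] : exists e o, odd o /\ j - i = 2 ^ e * o.
  by apply: dec2; rewrite subn_gt0.
have Ej : j = i + 2 ^ e * o by rewrite -Ed subnKC // ltnW.
have HN : 0 < 2 ^ e by rewrite expn_gt0.
have o1 : 1 <= o by move: Ho; case: (o).
have HNo : 2 ^ e <= 2 ^ e * o by rewrite leq_pmulr.
have Hm3 : 3 * 2 ^ e + 1 <= m.
  have [m' Em] : exists m', m = 2 * m' + 1.
    by exists m./2; rewrite -{1}(odd_double_half m) hm -muln2 addnC mulnC.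
  have HP : 2 ^ e * o <= k - 1 by lia.
  have [Ne|[N' Ne]] : 2 ^ e = 1 \/ exists N', 2 ^ e = 2 * N'.
    by case: (e) => [|e']; [left | right; exists (2 ^ e'); rewrite expnS].
  - rewrite Ne; lia.
  - move: HNo HP; rewrite Ne; move: (2 * N' * o) => P; lia.
set N := 2 ^ e in Ej HN HNo Hm3.
set q0 := (i * m) %/ N; set y0 := (i * m) %% N.
have Hy0 : y0 < N by rewrite ltn_mod.
have Ea : i * m = q0 * N + y0 by rewrite /q0 /y0 -divn_eq.
apply: (@no4' q0 (o * m)); first by rewrite oddM Ho hm.
move=> c hc.
have hx : c * N < m.
  have hcN : c * N <= 3 * N by apply: leq_mul => //; rewrite -ltnS.
  lia.
have := H _ hx.
have -> : i * m + c * N = 2 ^ e * (q0 + c) + y0 by rewrite Ea /N; ring.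
have -> : j * m + c * N = 2 ^ e * (q0 + o * m + c) + y0 by rewrite Ej mulnDl Ea /N; ring.
rewrite !ttN //.
by case: (tt y0); case: (tt _); case: (tt _).
Qed.

Lemma size_w k m : size (tm_factor 1 (k * m)) = k * m.
Proof. by rewrite /tm_factor size_map size_iota subn1. Qed.

Lemma nth_w k m n : n < k * m -> nth false (tm_factor 1 (k * m)) n = tt n.
Proof.
move=> H; rewrite /tm_factor (nth_map 0) ?size_iota ?subn1 //= nth_iota ?subn1 //.
Qed.

Definition blk k m j := take m (drop (j * m) (tm_factor 1 (k * m))).

Lemma nth_blk k m j x : j < k -> x < m -> nth false (blk k m j) x = tt (j * m + x).
Proof.
move=> hj hx; rewrite /blk nth_take // nth_drop nth_w //.
have : j.+1 * m <= k * m by rewrite leq_mul2r hj orbT.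
rewrite mulSn; lia.
Qed.

Lemma size_blk k m j : j < k -> size (blk k m j) = m.
Proof.
move=> hj; rewrite /blk size_takel // size_drop size_w.
have : j.+1 * m <= k * m by rewrite leq_mul2r hj orbT.
rewrite mulSn; lia.
Qed.

Lemma antipowerE k m : 0 < k ->
  antipower k (tm_factor 1 (k * m)) = uniq [seq blk k m j | j <- iota 0 k].
Proof. by move=> hk; rewrite /antipower size_w mulKn // dvdn_mulr. Qed.

Lemma collide k m i j : i < j -> j < k ->
  (forall x, x < m -> tt (i * m + x) = tt (j * m + x)) ->
  ~~ antipower k (tm_factor 1 (k * m)).
Proof.
move=> hij hjk H; rewrite antipowerE; last by apply: leq_ltn_trans hjk.
apply/(uniqPn [::]); exists i, j; split => //; first by rewrite size_map size_iota.
rewrite !(nth_map 0) ?size_iota ?(ltn_trans hij) // !nth_iota ?(ltn_trans hij) //.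
rewrite !add0n; apply: (@eq_from_nth _ false); first by rewrite !size_blk // (ltn_trans hij).
move=> x; rewrite size_blk ?(ltn_trans hij) // => hx.
by rewrite !nth_blk ?(ltn_trans hij) // H.
Qed.

Lemma inF_big k m : 3 <= k -> odd m -> 3 * k - 3 <= m -> in_F k m.
Proof.
move=> hk hm hkm; rewrite /in_F hm /=.
have m0 : 0 < m by case: (m) hm.
rewrite m0 /= antipowerE; last by apply: leq_trans hk.
rewrite map_inj_in_uniq ?iota_uniq // => i j.
rewrite !mem_iota !add0n => /andP[_ hi] /andP[_ hj] E.
have key : forall i j, i < j -> j < k -> blk k m i = blk k m j -> False.
  move=> i' j' hij hjk E'; apply: (@sep k m i' j' hk hm hkm hij hjk) => x hx.
  have := congr1 (fun s => nth false s x) E'.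
  by rewrite /= !nth_blk // (ltn_trans hij).
case: (ltngtP i j) => h //.
- by case: (key _ _ h hj E).
- by case: (key _ _ h hi (esym E)).
Qed.

Lemma not_inF_1 k : 3 <= k -> notin_F k 1.
Proof.
move=> hk; rewrite /notin_F /= /in_F /=.
apply: (@collide k 1 1 2) => // x; rewrite ltnS leqn0 => /eqP->.
have -> : 1 * 1 + 0 = 2 * 0 + 1 by [].
have -> : 2 * 1 + 0 = 2 * 1 by [].
by rewrite tE tO tt0.
Qed.

Lemma tt1 : tt 1 = true. Proof. by rewrite -[1]/(2 * 0 + 1) tO tt0. Qed.
Lemma tt2 : tt 2 = true. Proof. by rewrite -[2]/(2 * 1) tE tt1. Qed.
Lemma tt3 : tt 3 = false. Proof. by rewrite -[3]/(2 * 1 + 1) tO tt1. Qed.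
Lemma tt4 : tt 4 = true. Proof. by rewrite -[4]/(2 * 2) tE tt2. Qed.
Lemma tt5 : tt 5 = false. Proof. by rewrite -[5]/(2 * 2 + 1) tO tt2. Qed.

Lemma tm_family h G : 3 <= h -> 2 ^ h = G.+1 ->
  notin_F (G.+1 * G.+1 + G.+1 + 2) (3 * G * G + 5 * G + 3).
Proof.
move=> hh HG.
have G7 : 7 <= G.
  have : 2 ^ 3 <= 2 ^ h by rewrite leq_pexp2l.
  by rewrite HG.
have hN : 2 ^ (h + h) = G.+1 * G.+1 by rewrite expnD HG.
have hodd : odd (3 * G * G + 5 * G + 3) by rewrite !oddD !oddM /=; case: (odd G).
rewrite /notin_F /in_F hodd /=.
have -> : 0 < 3 * G * G + 5 * G + 3 by rewrite addn_gt0 orbT.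
rewrite /=.
apply: (@collide _ _ G.+2 (G.+2 + G.+1 * G.+1)); [lia | nia | ].
move=> x hx.
have [c [y [hc [hy Ez]]]] : exists c y, c < 3 /\ y < G.+1 * G.+1 /\ 1 + x = c * (G.+1 * G.+1) + y.
  have hN0 : 0 < G.+1 * G.+1 by [].
  exists ((1 + x) %/ (G.+1 * G.+1)), ((1 + x) %% (G.+1 * G.+1)); split; last split.
  - by rewrite ltn_divLR //; nia.
  - by rewrite ltn_mod.
  - exact: divn_eq.
have E1 : G.+2 * (3 * G * G + 5 * G + 3) + x = 2 ^ (h + h) * ((3 * G + 5) + c) + y.
  have -> : G.+2 * (3 * G * G + 5 * G + 3) + x = G.+1 * G.+1 * (3 * G + 5) + (1 + x) by ring.
  by rewrite Ez hN; ring.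
have E2 : (G.+2 + G.+1 * G.+1) * (3 * G * G + 5 * G + 3) + x =
   2 ^ (h + h) * ((3 * G + 5) + (3 * G * G + 5 * G + 3) + c) + y.
  have -> : (G.+2 + G.+1 * G.+1) * (3 * G * G + 5 * G + 3) + x =
     G.+1 * G.+1 * ((3 * G + 5) + (3 * G * G + 5 * G + 3)) + (1 + x) by ring.
  by rewrite Ez hN; ring.
rewrite E1 E2 !ttN ?hN //.
have -> : 3 * G + 5 + c = 2 ^ h * 3 + (2 + c) by rewrite HG; ring.
have -> : 3 * G + 5 + (3 * G * G + 5 * G + 3) + c =
   2 ^ (h + h) * 3 + (2 ^ h * 2 + (3 + c)) by rewrite hN HG; ring.
rewrite ttN; last by rewrite HG; lia.
rewrite ttN; last by rewrite hN HG; nia.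
rewrite ttN; last by rewrite HG; lia.
rewrite tt3 tt2.
by clear Ez E1 E2; case: c hc => [|[|[|c]]] //= _; rewrite ?addn0 ?tt2 ?tt3 ?tt4 ?tt5.
Qed.

Lemma ubF k i : 3 <= k -> notin_F k i -> i <= 3 * k - 4.
Proof.
move=> hk /andP[/andP[ho hp] hn]; rewrite leqNgt; apply/negP => hi.
by move/negP: hn; apply; apply: inF_big => //; lia.
Qed.

Arguments ubF {k i}.

Lemma Gamma_spec k : 3 <= k -> is_max_notF k (Gamma k).
Proof.
move=> hk; rewrite /Gamma; apply: epsilon_spec.
have exP : exists i, notin_F k i by exists 1; apply: not_inF_1.
have ubP : forall i, notin_F k i -> i <= 3 * k - 4 by move=> i; apply: ubF.
by case: (ex_maxnP exP ubP) => g Pg Hg; exists g; split.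
Qed.

Theorem theorem1 :
  (forall k : nat, 3 <= k ->
     (exists m, notin_F k m) /\
     (exists B, forall m, notin_F k m -> m <= B) /\
     Gamma k <= 3 * k - 4) /\
  (* limsup_{k -> oo} Gamma(k)/k = 3 *)
  (forall eps : rat, (0 < eps)%R ->
     (exists K : nat, forall k : nat, K <= k ->
        ((Gamma k)%:R / k%:R < 3 + eps :> rat)%R) /\
     (forall K : nat, exists k : nat, K <= k /\
        (3 - eps < (Gamma k)%:R / k%:R :> rat)%R)).
Proof.
split.
  move=> k hk; split; first by exists 1; apply: not_inF_1.
  split; first by exists (3 * k - 4) => m; apply: ubF.
  by case: (Gamma_spec k hk) => /(ubF hk).
move=> eps heps; split.
  exists 3 => k hk.
  have hG : Gamma k < 3 * k by case: (Gamma_spec k hk) => /(ubF hk) h _; lia.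
  have hk0 : (0 < k%:R :> rat)%R by rewrite ltr0n; lia.
  rewrite ltr_pdivrMr //.
  have : ((Gamma k)%:R < (3 * k)%:R :> rat)%R by rewrite ltr_nat.
  rewrite natrM => h1.
  have h2 := mulr_gt0 heps hk0.
  lra.
move=> K.
set n := Num.bound (5 / eps).
have hn : (5 / eps < n%:R :> rat)%R by apply: archi_boundP; rewrite divr_ge0 // ltW.
set h := n + K + 10.
have hpos : 0 < 2 ^ h by rewrite expn_gt0.
set G := (2 ^ h).-1.
have HG : 2 ^ h = G.+1 by rewrite prednK.
have hhG : h <= G by rewrite -ltnS -HG ltn_expl.
have h3 : 3 <= h by rewrite /h; lia.
have hfam := @tm_family h G h3 HG.
exists (G.+1 * G.+1 + G.+1 + 2); split.
  have : G <= G * G by rewrite leq_pmull //; lia.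
  lia.
have hk3 : 3 <= G.+1 * G.+1 + G.+1 + 2 by lia.
have hm := proj2 (Gamma_spec _ hk3) _ hfam.
have hk0 : (0 < (G.+1 * G.+1 + G.+1 + 2)%:R :> rat)%R by rewrite ltr0n.
rewrite ltr_pdivlMr //.
apply: (@lt_le_trans _ _ ((3 * G * G + 5 * G + 3)%:R)%R); last by rewrite ler_nat.
have -> : G.+1 * G.+1 + G.+1 + 2 = G * G + 3 * G + 4 by ring.
rewrite !natrD !natrM.
set g : rat := (G%:R)%R.
have hng : (n%:R <= g)%R by rewrite ler_nat; lia.
have hg10 : (10 <= g)%R by rewrite /g ler_nat; lia.
have h5 : (5 < eps * g)%R.
  have : (5 / eps < g)%R by apply: lt_le_trans hn hng.
  by rewrite ltr_pdivrMr // mulrC.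
have hA : (5 * g < eps * g * g)%R.
  by rewrite ltr_pM2r //; lra.
have hB : (0 < eps * (3 * g + 4))%R by apply: mulr_gt0 => //; lra.
lra.
Qed.
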